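(* Let $n\ge 6$. For every $n$-vertex graph $G$, $$av_1(G)\le \frac n2+1,$$ with equality if and only if $G=K_2\cup(n-2)K_1$, i.e. $G$ consists of a single edge together with $n-2$ isolated vertices.
   Context: All graphs are finite and simple. For a graph $G=(V,E)$, a set $S\subseteq V$ is a $1$-nearly independent vertex set if the subgraph induced by $S$ has exactly one edge. $\sigma_1(G)$ is the number of such sets, $S_1(G)$ the sum of their sizes, and $av_1(G)=S_1(G)/\sigma_1(G)$, with $av_1(G)=0$ when $G$ has no edges. *)

(* Defs.v *)
From mathcomp Require Import all_boot all_order all_algebra.
Set Implicit Arguments. Unset Strict Implicit. Unset Printing Implicit Defensive.
Import Order.TTheory GRing.Theory Num.Theory.

Definition simple_graph (T : finType) (e : rel T) : Prop :=
  symmetric e /\ irreflexive e.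

Definition edges (T : finType) (e : rel T) : {set {set T}} :=
  [set E : {set T} | [exists x, exists y, (E == [set x; y]) && e x y]].

Definition n_edges_in (T : finType) (e : rel T) (S : {set T}) : nat :=
  #|[set E in edges e | E \subset S]|.

Definition nearly_indep1 (T : finType) (e : rel T) : {set {set T}} :=
  [set S : {set T} | n_edges_in e S == 1%N].

Definition sigma1 (T : finType) (e : rel T) : nat := #|nearly_indep1 e|.

Definition S1 (T : finType) (e : rel T) : nat :=
  \sum_(S in nearly_indep1 e) #|S|.

(* av_1(G) = S_1/sigma_1, and 0 if G has no edges (then sigma_1 = 0). *)
Definition av1 (T : finType) (e : rel T) : rat :=
  if sigma1 e == 0%N then 0%R else ((S1 e)%:R / (sigma1 e)%:R)%R.

(* Main.v *)
Require Import Defs.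
From mathcomp Require Import all_boot all_order all_algebra.
From mathcomp Require Import zify ring lra.
Import Order.TTheory GRing.Theory Num.Theory.
Set Implicit Arguments. Unset Strict Implicit.

Section Aux.
Local Open Scope nat_scope.

Lemma edgesP (T : finType) (e : rel T) E :
  reflect (exists x y, E = [set x; y] /\ e x y) (E \in edges e).
Proof.
rewrite /edges inE; apply: (iffP existsP).
  by move=> [x /existsP [y /andP [/eqP -> h]]]; exists x, y.
by move=> [x [y [-> h]]]; exists x; apply/existsP; exists y; rewrite eqxx h.
Qed.

Lemma edge_card2 (T : finType) (e : rel T) (He : simple_graph e) E :
  E \in edges e -> #|E| = 2.
Proof.
move=> /edgesP [x [y [-> h]]]; rewrite cards2.
suff -> : x != y by [].
by apply/eqP => exy; move: h; rewrite exy (He.2 y).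
Qed.

Lemma edge_sub_eq (T : finType) (e : rel T) (He : simple_graph e) E1 E2 :
  E1 \in edges e -> E2 \in edges e -> E1 \subset E2 -> E1 = E2.
Proof.
move=> h1 h2 s; apply/eqP; rewrite eqEcard s.
by rewrite (edge_card2 He h1) (edge_card2 He h2).
Qed.

Lemma NP (T : finType) (e : rel T) (S : {set T}) :
  reflect (exists E0, [set E in edges e | E \subset S] = [set E0])
          (S \in nearly_indep1 e).
Proof. rewrite /nearly_indep1 inE /n_edges_in; exact: cards1P. Qed.

Lemma memsub (T : finType) (e : rel T) (S E : {set T}) :
  (E \in [set E in edges e | E \subset S]) = (E \in edges e) && (E \subset S).
Proof. by rewrite in_set. Qed.

Lemma N_edge (T : finType) (e : rel T) (S : {set T}) E0 :
  [set E in edges e | E \subset S] = [set E0] -> E0 \in edges e /\ E0 \subset S.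
Proof.
move=> h; have : E0 \in [set E0] by rewrite set11.
by rewrite -h memsub => /andP.
Qed.

Lemma N_unique (T : finType) (e : rel T) (S : {set T}) E0 E :
  [set E in edges e | E \subset S] = [set E0] ->
  E \in edges e -> E \subset S -> E = E0.
Proof.
move=> h he hs; have : E \in [set E in edges e | E \subset S].
  by rewrite memsub he hs.
by rewrite h in_set1 => /eqP.
Qed.

Lemma remove_N (T : finType) (e : rel T) (S : {set T}) E0 w :
  [set E in edges e | E \subset S] = [set E0] ->
  (S :\ w \in nearly_indep1 e) = (w \notin E0).
Proof.
move=> h; apply/idP/idP.
  move=> /NP [E' h']; have [E'e] := N_edge h'.
  rewrite subsetD1 => /andP [E'S wE'].
  by have := N_unique h E'e E'S => <-.
move=> wE0; apply/NP; exists E0; apply/setP => E; rewrite memsub in_set1.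
apply/idP/idP.
  move=> /andP [Ee]; rewrite subsetD1 => /andP [ES _].
  by rewrite (N_unique h Ee ES) eqxx.
move=> /eqP ->; have [E0e E0S] := N_edge h.
by rewrite E0e subsetD1 E0S wE0.
Qed.

Lemma card_removable (T : finType) (e : rel T) (He : simple_graph e) (S : {set T}) E0 :
  [set E in edges e | E \subset S] = [set E0] ->
  #|[set w in S | S :\ w \in nearly_indep1 e]| + 2 = #|S|.
Proof.
move=> h.
have -> : [set w in S | S :\ w \in nearly_indep1 e] = S :\: E0.
  by apply/setP => w; rewrite in_set in_setD (remove_N w h) andbC.
have [E0e E0S] := N_edge h.
have := subset_leq_card E0S.
by rewrite cardsD (setIidPr E0S) (edge_card2 He E0e) => h2; rewrite subnK.
Qed.

Lemma card_in_sum (T : finType) (A : {pred T}) (P : pred T) :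
  #|[set x in A | P x]| = \sum_(x in A) (P x : nat).
Proof.
rewrite -sum1_card big_mkcond [RHS]big_mkcond /=; apply: eq_bigr => x _.
by rewrite !inE; case: (x \in A); case: (P x).
Qed.

Lemma card_sum (T : finType) (S : {set T}) : #|S| = \sum_x ((x \in S) : nat).
Proof.
rewrite -sum1_card big_mkcond /=; apply: eq_bigr => x _.
by case: (x \in S).
Qed.

Definition Aw (T : finType) (e : rel T) w :=
  [set S in nearly_indep1 e | (w \in S) && (S :\ w \in nearly_indep1 e)].
Definition Cw (T : finType) (e : rel T) w :=
  [set S in nearly_indep1 e | w \notin S].

Lemma key (T : finType) (e : rel T) (He : simple_graph e) :
  S1 e + S1 e + \sum_w #|Cw e w| = \sum_w #|Aw e w| + (#|T| + 2) * sigma1 e.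
Proof.
have h1 : S1 e = \sum_w #|Aw e w| + 2 * sigma1 e.
  rewrite /S1 /sigma1.
  transitivity (\sum_(S in nearly_indep1 e)
     (#|[set w in S | S :\ w \in nearly_indep1 e]| + 2)).
    apply: eq_bigr => S SN; case/NP: SN => E0 h.
    by rewrite (card_removable He h).
  rewrite big_split /= sum_nat_const mulnC; congr (_ + _).
  transitivity (\sum_(S in nearly_indep1 e)
     \sum_w (((w \in S) && (S :\ w \in nearly_indep1 e)) : nat)).
    apply: eq_bigr => S _; rewrite card_in_sum big_mkcond.
    by apply: eq_bigr => w _; case: (w \in S).
  rewrite exchange_big; apply: eq_bigr => w _; rewrite /Aw card_in_sum.
  by [].
have h2 : S1 e = \sum_w \sum_(S in nearly_indep1 e) ((w \in S) : nat).
  rewrite /S1 exchange_big /=; apply: eq_bigr => S _; exact: card_sum.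
have h3 : forall w, \sum_(S in nearly_indep1 e) ((w \in S) : nat) + #|Cw e w|
          = sigma1 e.
  move=> w; rewrite /Cw card_in_sum -big_split /sigma1 -sum1_card.
  by apply: eq_bigr => S _; case: (w \in S).
have h4 : \sum_w \sum_(S in nearly_indep1 e) ((w \in S) : nat)
          + \sum_w #|Cw e w| = #|T| * sigma1 e.
  rewrite -big_split /= (eq_bigr _ (fun w _ => h3 w)).
  by rewrite -sum1_card big_distrl /=; apply: eq_bigr => w _; rewrite mul1n.
rewrite {1}h1 {1}h2 -addnA h4; lia.
Qed.

Lemma imA (T : finType) (e : rel T) w :
  (fun S => S :\ w) @: Aw e w \subset Cw e w.
Proof.
apply/subsetP => X /imsetP [S]; rewrite /Aw in_set => /andP [SN /andP [wS SwN]] ->.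
by rewrite /Cw in_set SwN setD11.
Qed.

Lemma cardA (T : finType) (e : rel T) w :
  #|(fun S => S :\ w) @: Aw e w| = #|Aw e w|.
Proof.
apply: card_in_imset => S1 S2; rewrite /Aw !in_set.
move=> /andP [_ /andP [w1 _]] /andP [_ /andP [w2 _]] eq.
by rewrite -(setD1K w1) -(setD1K w2) eq.
Qed.

Lemma A_le_C (T : finType) (e : rel T) w : #|Aw e w| <= #|Cw e w|.
Proof. by rewrite -cardA; apply: subset_leq_card; apply: imA. Qed.

Lemma one_edge_N (T : finType) (e : rel T) (X : {set T}) w :
  #|edges e| = 1 -> X \in nearly_indep1 e -> w |: X \in nearly_indep1 e.
Proof.
move=> /eqP /cards1P [E1 hE] /NP [E' h]; have [E'e E'X] := N_edge h.
have E'1 : E' = E1 by move: E'e; rewrite hE inE => /eqP.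
apply/NP; exists E'; apply/setP => E; rewrite memsub in_set1.
apply/idP/idP.
  by move=> /andP [Ee _]; move: Ee; rewrite hE inE E'1.
move=> /eqP ->; rewrite E'e /=.
by apply: subset_trans E'X _; apply: subsetUr.
Qed.

Lemma A_eq_C (T : finType) (e : rel T) w :
  #|edges e| = 1 -> #|Aw e w| = #|Cw e w|.
Proof.
move=> h1; rewrite -cardA; apply/eqP; rewrite eqn_leq subset_leq_card ?imA //=.
apply: subset_leq_card; apply/subsetP => X; rewrite /Cw in_set => /andP [XN wX].
apply/imsetP; exists (w |: X); last by rewrite setU1K.
by rewrite /Aw in_set one_edge_N // setU11 setU1K.
Qed.

Lemma A_lt_C (T : finType) (e : rel T) w (X : {set T}) :
  X \in nearly_indep1 e -> w \notin X -> w |: X \notin nearly_indep1 e ->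
  #|Aw e w| < #|Cw e w|.
Proof.
move=> XN wX wXN; rewrite -cardA; apply: proper_card; apply/properP; split.
  exact: imA.
exists X; first by rewrite /Cw in_set XN wX.
apply/imsetP => [[S]]; rewrite /Aw in_set => /andP [SN /andP [wS _]] XS.
by move: wXN; rewrite XS setD1K // SN.
Qed.

Lemma edge_N (T : finType) (e : rel T) (He : simple_graph e) E :
  E \in edges e -> E \in nearly_indep1 e.
Proof.
move=> hE; apply/NP; exists E; apply/setP => E'; rewrite memsub in_set1.
apply/andP/eqP => [[E'e E'E]|->]; first exact: (edge_sub_eq He E'e hE E'E).
by rewrite hE subxx.
Qed.

Lemma two_edges_notN (T : finType) (e : rel T) E1 E2 (S : {set T}) :
  E1 \in edges e -> E2 \in edges e -> E1 != E2 -> E1 \subset S ->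
  E2 \subset S -> S \notin nearly_indep1 e.
Proof.
move=> E1e E2e ne E1S E2S; apply/negP => /NP [E0 h].
move: ne; rewrite (N_unique h E1e E1S) (N_unique h E2e E2S).
by rewrite eqxx.
Qed.

Lemma witness_abcd (T : finType) (e : rel T) (He : simple_graph e) a b c d :
  e a b -> e c d -> c \notin [set a; b] ->
  exists w X, [/\ X \in nearly_indep1 e, w \notin X &
                  w |: X \notin nearly_indep1 e].
Proof.
move=> eab ecd cE1.
have E1e : [set a; b] \in edges e by apply/edgesP; exists a, b.
have E2e : [set c; d] \in edges e by apply/edgesP; exists c, d.
have ne : [set a; b] != [set c; d].
  by apply/eqP => eq; move: cE1; rewrite eq !inE eqxx.
case: (boolP (c |: [set a; b] \in nearly_indep1 e)) => H.
  exists d, (c |: [set a; b]); split => //.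
    apply/negP => dY; move: H; apply/negP.
    apply: (two_edges_notN E1e E2e ne); first exact: subsetUr.
    by rewrite subUset !sub1set setU11 dY.
  apply: (two_edges_notN E1e E2e ne).
    by apply/subsetP => x; rewrite !inE => ->; rewrite !orbT.
  by apply/subsetP => x; rewrite !inE => /orP [] ->; rewrite ?orbT.
exists c, [set a; b]; split => //; exact: edge_N.
Qed.

Lemma witness (T : finType) (e : rel T) (He : simple_graph e) :
  1 < #|edges e| ->
  exists w X, [/\ X \in nearly_indep1 e, w \notin X &
                  w |: X \notin nearly_indep1 e].
Proof.
move=> h2.
have [E1 E1e] : exists E1, E1 \in edges e.
  by apply/card_gt0P; apply: leq_trans h2.
have : 0 < #|edges e :\ E1|.
  by move: h2; rewrite (cardsD1 E1) E1e add1n ltnS.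
case/card_gt0P => E2; rewrite in_setD1 => /andP [ne E2e].
have E1e' := E1e; have E2e' := E2e.
case/edgesP: E1e => a [b [E1d eab]]; case/edgesP: E2e => c [d [E2d ecd]].
case: (boolP (c \in [set a; b])) => cE; last first.
  exact: (witness_abcd He eab ecd cE).
case: (boolP (d \in [set a; b])) => dE; last first.
  have edc : e d c by rewrite He.1.
  exact: (witness_abcd He eab edc dE).
exfalso; move: ne; rewrite (edge_sub_eq He E2e' E1e') ?eqxx //.
by rewrite E2d E1d subUset !sub1set cE dE.
Qed.

Lemma sigma_pos (T : finType) (e : rel T) :
  sigma1 e != 0 -> 0 < #|edges e|.
Proof.
rewrite /sigma1 -lt0n => /card_gt0P [S /NP [E0 h]].
have [E0e _] := N_edge h; apply/card_gt0P; by exists E0.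
Qed.

End Aux.

Local Open Scope ring_scope.

Theorem mainTheorem9 (n : nat) (e : rel 'I_n) :
  (6 <= n)%N -> simple_graph e ->
  av1 e <= n%:R / 2 + 1 /\
  (av1 e = n%:R / 2 + 1 <-> #|edges e| = 1%N).
Proof.
move=> _ He.
have K := key He; rewrite card_ord in K.
have hle : (S1 e + S1 e <= (n + 2) * sigma1 e)%N.
  have : (\sum_w #|Aw e w| <= \sum_w #|Cw e w|)%N.
    by apply: leq_sum => w _; apply: A_le_C.
  lia.
have pos : 0 < n%:R / 2 + 1 :> rat.
  by apply: ltr_wpDl; [apply: divr_ge0 | ].
have cast : forall a b : nat, (a + a = b * sigma1 e)%N -> sigma1 e != 0%N ->
    (a%:R / (sigma1 e)%:R = (b%:R / 2 : rat) ).
  move=> a b hab hs.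
  have hs' : (sigma1 e)%:R != 0 :> rat by rewrite pnatr_eq0.
  apply/eqP; rewrite eqr_div ?pnatr_eq0 //; apply/eqP.
  by rewrite -!natrM; congr (_%:R); lia.
split.
  rewrite /av1; case: eqP => [_|hs]; first exact: ltW.
  have hs0 : (0 < (sigma1 e)%:R :> rat) by rewrite ltr0n lt0n; apply/eqP.
  rewrite ler_pdivrMr //.
  have : ((S1 e + S1 e)%:R <= ((n + 2) * sigma1 e)%:R :> rat) by rewrite ler_nat.
  rewrite natrM !natrD => h; nra.
split.
  rewrite /av1; case: eqP => [_ h|hs]; first by move: pos; rewrite -h ltxx.
  move=> heq.
  have hs' : (sigma1 e)%:R != 0 :> rat by rewrite pnatr_eq0; apply/eqP.
  have E : (S1 e + S1 e = (n + 2) * sigma1 e)%N.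
    apply/eqP; rewrite -(eqr_nat rat) natrM !natrD; apply/eqP.
    move: heq; move/(congr1 (fun x => x * (sigma1 e)%:R)).
    by rewrite divfK // => ->; field.
  have hp : (0 < #|edges e|)%N by apply: sigma_pos; apply/eqP.
  have [h0|h2|h1] := ltngtP #|edges e| 1; last lia.
    by exfalso; move: hp; rewrite ltnNge -ltnS h0.
  have [w [X [XN wX wXN]]] := witness He h2.
  have : (\sum_w #|Aw e w| < \sum_w #|Cw e w|)%N.
    rewrite (bigD1 w) //= [X in (_ < X)%N](bigD1 w) //=.
    apply: leq_trans (leq_add (A_lt_C XN wX wXN) (leqnn _)) _.
    rewrite leq_add2l; apply: leq_sum => v _; exact: A_le_C.
  lia.
move=> h1.
have eqs : (\sum_w #|Aw e w| = \sum_w #|Cw e w|)%N.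
  by apply: eq_bigr => w _; apply: A_eq_C.
have E : (S1 e + S1 e = (n + 2) * sigma1 e)%N by lia.
have hs : sigma1 e != 0%N.
  move: h1 => /eqP /cards1P [E0 hE].
  rewrite /sigma1 -lt0n; apply/card_gt0P; exists E0; apply: edge_N => //.
  by rewrite hE set11.
rewrite /av1 (negbTE hs) (cast _ _ E hs) natrD.
by field.
Qed.
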